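(* Consider an instance of the robust flow design problem on a directed graph $D=(V,A)$ with source $s$, sink $t$, capacities $u\in\mathbb{R}_+^A$, protection cost coefficients $\gamma\in\mathbb{R}_+^A$, flow player budget $B_F>0$ and interdictor budget $B_I\ge0$. Let $x$ be an optimal solution of the linear program $[\mathrm{LP}_{\mathrm{design}}]$: maximize $\sum_{P\in\mathcal{P}}\big(1-\frac{B_I}{B_F}\sum_{e\in P}\gamma_e\big)x_P$ subject to $\sum_{P\in\mathcal{P}:e\in P}x_P\le u_e$ for all $e\in A$ and $x_P\ge0$ for all $P\in\mathcal{P}$. Then $x$ is an optimal flow for the flow player in the design problem, i.e. there exist interdiction costs $c$ such that $(x,c)$ is an optimal solution of the design problem.
   Context: $\mathcal{P}$ is the set of $s$-$t$-paths in $D$ and $X=\{x\in\mathbb{R}_+^{\mathcal{P}}:\sum_{P\ni e}x_P\le u_e\ \forall e\in A\}$. In the design problem the flow player chooses $x\in X$ and interdiction costs $c\in\mathbb{R}_+^A$ subject to $\sum_{e\in A}\gamma_e c_e\sum_{P\in\mathcal{P}:e\in P}x_P\le B_F$; for arcs with $\gamma_e=0$ one has $c_e=\infty$ (flow cannot be stolen there). The interdictor then chooses $z\in\mathbb{R}_+^{A\times\mathcal{P}}$ with $\sum_{e\in A}c_e\sum_{P\ni e}z_{e,P}\le B_I$ (and $z_{e,P}=0$ if $c_e=\infty$), and the value is $\mathrm{val}(x,z)=\sum_{P\in\mathcal{P}}(x_P-\sum_{e\in P}z_{e,P})^+$. An optimal solution is a feasible pair $(x,c)$ maximizing $\min_z\mathrm{val}(x,z)$.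 *)

(* Defs.v *)
From HB Require Import structures.
From mathcomp Require Import all_boot all_order all_algebra.
From mathcomp Require Import classical_sets reals.
Set Implicit Arguments. Unset Strict Implicit. Unset Printing Implicit Defensive.
Import Order.TTheory GRing.Theory Num.Theory.
Local Open Scope ring_scope.
Local Open Scope classical_set_scope.

Section RobustFlow.
Variables (V A : finType) (tl hd : A -> V) (s t : V).

Fixpoint walk_to_t (v : V) (P : seq A) : bool :=
  match P with
  | [::] => v == t
  | e :: P' => (tl e == v) && walk_to_t (hd e) P'
  end.

Definition is_stpath (P : seq A) : bool :=
  walk_to_t s P && uniq (s :: map hd P).

(* the (finite) list of all s-t paths; a simple path has at most #|A| arcs *)
Definition stpaths : seq (seq A) :=
  undup [seq P <- flatten [seq [seq tval tp | tp : n.-tuple A] | n <- iota 0 #|A|.+1]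
        | is_stpath P].

Variable R : realType.

(* x is a path flow, x P being the flow on path P (values off stpaths are irrelevant) *)
Definition arc_load (x : seq A -> R) (e : A) : R :=
  \sum_(P <- stpaths | e \in P) x P.

Definition flow_feasible (u : A -> R) (x : seq A -> R) : Prop :=
  (forall P, P \in stpaths -> 0 <= x P) /\ (forall e, arc_load x e <= u e).

Definition lp_obj (gam : A -> R) (BF BI : R) (x : seq A -> R) : R :=
  \sum_(P <- stpaths) (1 - BI / BF * \sum_(e <- P) gam e) * x P.

Definition lp_optimal (u gam : A -> R) (BF BI : R) (x : seq A -> R) : Prop :=
  flow_feasible u x /\
  forall x', flow_feasible u x' -> lp_obj gam BF BI x' <= lp_obj gam BF BI x.

(* Interdiction costs c: arcs with gam e = 0 have cost +oo; this is modelled by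
   ignoring c e on such arcs (gam e * c e = 0 in the flow budget, and the
   interdictor is forbidden to use them: z e P = 0). *)
Definition design_feasible (u gam : A -> R) (BF : R) (x : seq A -> R) (c : A -> R)
  : Prop :=
  flow_feasible u x /\ (forall e, 0 <= c e) /\
  \sum_(e : A) gam e * c e * arc_load x e <= BF.

Definition interd_feasible (gam : A -> R) (BI : R) (c : A -> R) (z : A -> seq A -> R)
  : Prop :=
  (forall e P, 0 <= z e P) /\ (forall e P, gam e = 0 -> z e P = 0) /\
  \sum_(e : A) c e * arc_load (z e) e <= BI.

Definition val (x : seq A -> R) (z : A -> seq A -> R) : R :=
  \sum_(P <- stpaths) Num.max 0 (x P - \sum_(e <- P) z e P).

Definition worst_val (gam : A -> R) (BI : R) (x : seq A -> R) (c : A -> R) : R :=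
  inf [set val x z | z in [set z | interd_feasible gam BI c z]].

Definition design_optimal (u gam : A -> R) (BF BI : R) (x : seq A -> R) (c : A -> R)
  : Prop :=
  design_feasible u gam BF x c /\
  forall x' c', design_feasible u gam BF x' c' ->
    worst_val gam BI x' c' <= worst_val gam BI x c.

End RobustFlow.

(* Main.v *)
Require Import Defs.
From HB Require Import structures.
From mathcomp Require Import all_boot all_order all_algebra.
From mathcomp Require Import classical_sets reals ring.
Import Order.TTheory GRing.Theory Num.Theory.
Local Open Scope ring_scope.

Lemma stpath_uniq (V A : finType) (tl hd : A -> V) (s t : V) (P : seq A) :
  P \in stpaths tl hd s t -> uniq P.
Proof.
rewrite /stpaths mem_undup mem_filter => /andP[/andP[_ /= /andP[_ u]] _].
exact: map_uniq u.
Qed.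

Lemma exch (V A : finType) (tl hd : A -> V) (s t : V) (R : realType)
  (F : A -> seq A -> R) :
  \sum_(P <- stpaths tl hd s t) \sum_(e <- P) F e P =
  \sum_(e : A) \sum_(P <- stpaths tl hd s t | e \in P) F e P.
Proof.
transitivity (\sum_(P <- stpaths tl hd s t) \sum_(e : A) (if e \in P then F e P else 0)).
  apply: eq_big_seq => P /stpath_uniq uP.
  by rewrite (big_uniq _ uP) big_mkcond.
rewrite exchange_big; apply: eq_bigr => e _.
by rewrite [RHS]big_mkcond.
Qed.

Lemma term_le_sum (I : eqType) (R : realType) (r : seq I) (F : I -> R) (j : I) :
  uniq r -> j \in r -> (forall i, i \in r -> 0 <= F i) -> F j <= \sum_(i <- r) F i.
Proof.
move=> ur jr F0; rewrite (bigD1_seq j jr ur) /= lerDl.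
rewrite big_seq_cond; apply: sumr_ge0 => i /andP[ir _]; exact: F0.
Qed.

Theorem theorem2 (V A : finType) (tl hd : A -> V) (s t : V) (R : realType)
  (u gam : A -> R) (BF BI : R)
  (hu : forall e, 0 <= u e) (hgam : forall e, 0 <= gam e)
  (hBF : 0 < BF) (hBI : 0 <= BI)
  (x : seq A -> R) :
  lp_optimal tl hd s t u gam BF BI x ->
  exists c : A -> R, design_optimal tl hd s t u gam BF BI x c.
Proof.
move=> [fx xopt].
set st := stpaths tl hd s t.
have ust : uniq st by exact: undup_uniq.
have load_ge0 : forall y, flow_feasible tl hd s t u y -> forall e, 0 <= arc_load tl hd s t y e.
  move=> y [y0 _] e; rewrite /arc_load big_seq_cond; apply: sumr_ge0 => P /andP[PS _].
  exact: y0.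
set S := \sum_(e : A) gam e * arc_load tl hd s t x e.
have S0 : 0 <= S by apply: sumr_ge0 => e _; apply: mulr_ge0 => //; exact: load_ge0.
have kBF : 0 <= BI / BF by apply: divr_ge0 => //; exact: ltW.
have hS : \sum_(P <- st) (\sum_(e <- P) gam e) * x P = S.
  rewrite /S.
  transitivity (\sum_(P <- st) \sum_(e <- P) gam e * x P).
    by apply: eq_bigr => P _; rewrite mulr_suml.
  rewrite (@exch _ _ tl hd s t _ (fun e P => gam e * x P)); apply: eq_bigr => e _.
  by rewrite /arc_load mulr_sumr.
exists (fun _ => BF / S).
have dfeas : design_feasible tl hd s t u gam BF x (fun _ => BF / S).
  split => //; split; first by move=> e; apply: divr_ge0 => //; exact: ltW.
  have -> : \sum_(e : A) gam e * (BF / S) * arc_load tl hd s t x e = BF / S * S.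
    by rewrite mulr_sumr; apply: eq_bigr => e _; rewrite mulrAC mulrC.
  have [->|Sn0] := eqVneq S 0; first by rewrite mulr0 ltW.
  by rewrite divfK.
split => // x' c' [fx' [c'0 bud]].
apply: (@le_trans _ _ (lp_obj tl hd s t gam BF BI x)); last first.
  rewrite /worst_val; apply: lb_le_inf.
    exists (Defs.val tl hd s t x (fun _ _ => 0)); exists (fun _ _ => 0) => //.
    split => //; split => //.
    rewrite big1 // => e _; rewrite /arc_load big1 ?mulr0 //.
  move=> _ [z [z0 [zg zc]] <-].
  have lpE : lp_obj tl hd s t gam BF BI x = \sum_(P <- st) x P - BI / BF * S.
    rewrite /lp_obj -hS mulr_sumr -sumrB; apply: eq_bigr => P _.
    by rewrite mulrBl mul1r mulrA.
  have [Sz|Sn0] := eqVneq S 0.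
    rewrite /lp_obj /Defs.val big_seq [X in _ <= X]big_seq; apply: ler_sum => P PS.
    have hP : (\sum_(e <- P) gam e) * x P = 0.
      apply/eqP; rewrite eq_le; apply/andP; split.
        rewrite -[X in _ <= X]Sz -hS; apply: (@term_le_sum _ _ st (fun P => (\sum_(e <- P) gam e) * x P) P) => //.
        move=> Q QS; apply: mulr_ge0; [apply: sumr_ge0 => *; exact: hgam | exact: fx.1 _ QS].
      apply: mulr_ge0; [apply: sumr_ge0 => *; exact: hgam | exact: fx.1 _ PS].
    move/eqP: hP; rewrite mulf_eq0 => /orP[/eqP G0 | /eqP x0].
      have gP : forall e, e \in P -> gam e = 0.
        move=> e eP; apply/eqP; rewrite eq_le hgam andbT -G0.
        apply: (@term_le_sum _ _ P gam e). exact: stpath_uniq PS. exact: eP. move=> *; exact: hgam.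
      rewrite G0 mulr0 subr0 mul1r big1_seq ?subr0; last by move=> e /andP[_ eP]; rewrite zg // gP.
      by rewrite le_max lexx orbT.
    by rewrite x0 mulr0 le_max lexx.
  have Sp : 0 < S by rewrite lt_def Sn0 S0.
  set W := \sum_(e : A) arc_load tl hd s t (z e) e.
  have hW : \sum_(P <- st) \sum_(e <- P) z e P = W by exact: (@exch _ _ tl hd s t _ z).
  have WB : W * BF <= BI * S.
    rewrite -mulr_sumr in zc.
    have -> : W * BF = BF / S * W * S by rewrite mulrAC divfK // mulrC.
    exact: ler_wpM2r.
  rewrite lpE; apply: (@le_trans _ _ (\sum_(P <- st) x P - W)).
    by rewrite lerD2l lerN2 mulrAC ler_pdivlMr.
  rewrite -hW -sumrB /Defs.val; apply: ler_sum => P _; by rewrite le_max lexx orbT.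
set a := fun P : seq A => BI / BF * \sum_(e <- P) gam e.
set m := fun P => if a P <= 1 then 1 else (a P)^-1.
have m0 : forall P, 0 <= m P /\ m P <= 1.
  move=> P; rewrite /m; case: ifP => [_|/negbT]; first by rewrite ler01 lexx.
  rewrite -ltNge => a1; have ap : 0 < a P by exact: lt_trans ltr01 a1.
  by rewrite invr_ge0 ltW // ltW // invf_lt1.
set z := fun e P => gam e * (Num.max 0 (x' P) * (BI / BF * m P)).
have zfeas : interd_feasible tl hd s t gam BI c' z.
  split.
    move=> e P; apply: mulr_ge0 => //; apply: mulr_ge0; first by rewrite le_max lexx.
    by apply: mulr_ge0 => //; exact: (m0 P).1.
  split; first by move=> e P g0; rewrite /z g0 mul0r.
  apply: (@le_trans _ _ (BI / BF * \sum_(e : A) gam e * c' e * arc_load tl hd s t x' e)); last first.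
    apply: le_trans (ler_wpM2l kBF bud) _.
    by rewrite divfK // gt_eqF.
  rewrite mulr_sumr; apply: ler_sum => e _.
  have -> : BI / BF * (gam e * c' e * arc_load tl hd s t x' e) =
     c' e * \sum_(P <- st | e \in P) (gam e * (x' P * (BI / BF))).
    by rewrite /arc_load !mulr_sumr; apply: eq_bigr => P _; ring.
  apply: ler_wpM2l; first exact: c'0.
  rewrite /arc_load big_seq_cond [X in _ <= X]big_seq_cond; apply: ler_sum => P /andP[PS _].
  rewrite /z (elimT max_idPr (fx'.1 P PS)); apply: ler_wpM2l => //.
  apply: ler_wpM2l; first exact: fx'.1.
  rewrite -[X in _ <= X]mulr1; apply: ler_wpM2l => //; exact: (m0 P).2.
set x'' := fun P => if a P <= 1 then x' P else 0.
have fx'' : flow_feasible tl hd s t u x''.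
  split; first by move=> P PS; rewrite /x''; case: ifP => // _; exact: fx'.1.
  move=> e; apply: le_trans (fx'.2 e); rewrite /arc_load big_seq_cond [X in _ <= X]big_seq_cond.
  apply: ler_sum => P /andP[PS _]; rewrite /x''; case: ifP => // _; exact: fx'.1.
apply: le_trans (xopt _ fx'').
rewrite /worst_val; apply: (@le_trans _ _ (Defs.val tl hd s t x' z)).
  apply: ge_inf; last by exists z.
  exists 0 => _ [z1 _ <-]; rewrite /Defs.val; apply: sumr_ge0 => P _; by rewrite le_max lexx.
rewrite /Defs.val /lp_obj big_seq [X in _ <= X]big_seq; apply: ler_sum => P PS.
have dP : \sum_(e <- P) z e P = a P * x' P * m P.
  by rewrite /z -mulr_suml (elimT max_idPr (fx'.1 P PS)) /a; ring.
rewrite dP /x'' /m; case: ifP => a1.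
  rewrite mulr1.
  have h : 0 <= x' P - a P * x' P.
    by rewrite -{1}[x' P]mul1r -mulrBl; apply: mulr_ge0; [rewrite subr_ge0 | exact: fx'.1].
  by rewrite (elimT max_idPr h) /a mulrBl mul1r.
have ap : 0 < a P by move/negbT: a1; rewrite -ltNge; exact: lt_trans ltr01.
by rewrite mulrAC mulfV ?gt_eqF // mul1r subrr maxxx mulr0.
Qed.
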